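(* Consider a Pólya urn that initially contains $M$ balls, all of different colors. Repeatedly draw a ball uniformly at random from the urn and return it together with another ball of the same color, until there are $N$ balls in the urn ($N\ge M$, $N\ge2$). If two balls are then chosen uniformly at random (without replacement) from the urn, the probability that they have the same color is at most $2/(M+1)$. *)

(* Defs.v *)
From mathcomp Require Import all_boot all_order all_algebra.
Set Implicit Arguments. Unset Strict Implicit. Unset Printing Implicit Defensive.
Import Order.TTheory GRing.Theory Num.Theory.
Local Open Scope ring_scope.

(* An urn configuration: number of balls of each of the M colours. *)
Definition config (M : nat) := {ffun 'I_M -> nat}.

Definition total M (c : config M) : nat := (\sum_(i < M) c i)%N.

Definition incr M (c : config M) (i : 'I_M) : config M :=
  [ffun j => (c j + (j == i))%N].

Definition init_urn M : config M := [ffun _ => 1%N].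

(* Expectation of f after k more Pólya steps starting from configuration c:
   at each step colour i is drawn with probability c i / total c. *)
Fixpoint urn_exp M (f : config M -> rat) (k : nat) (c : config M) : rat :=
  match k with
  | 0 => f c
  | k'.+1 => \sum_(i < M) ((c i)%:R / (total c)%:R) * urn_exp f k' (incr c i)
  end.

(* Probability that two balls drawn uniformly at random without replacement
   from the urn c have the same colour: first draw colour i with probability
   c i / n, then again colour i with probability (c i - 1) / (n - 1). *)
Definition same_color_prob M (c : config M) : rat :=
  \sum_(i < M) ((c i)%:R / (total c)%:R) * (((c i)%:R - 1) / ((total c)%:R - 1)).

(* Main.v *)
Require Import Defs.
From mathcomp Require Import all_boot all_order all_algebra.
From mathcomp Require Import ring lra.
Import Order.TTheory GRing.Theory Num.Theory.
Set Implicit Arguments. Unset Strict Implicit.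
Local Open Scope ring_scope.

Lemma total_incr M (c : config M) i : Defs.total (Defs.incr c i) = (Defs.total c).+1.
Proof.
rewrite /Defs.total (bigD1 i) //= [in RHS](bigD1 i) //= ffunE eqxx.
rewrite (eq_bigr (fun j => c j)); first by rewrite addn1 addSn.
by move=> j /negbTE ji; rewrite ffunE ji addn0.
Qed.

Definition Ssq M (c : config M) : rat := \sum_(i < M) (c i)%:R * ((c i)%:R - 1).
Definition qv M (c : config M) : rat :=
  Ssq c / ((Defs.total c)%:R * ((Defs.total c)%:R + 1)) + 2 / ((Defs.total c)%:R + 1).

Lemma Sq_incr M (c : config M) i : Ssq (Defs.incr c i) = Ssq c + 2 * (c i)%:R.
Proof.
rewrite /Ssq (bigD1 i) //= [in RHS](bigD1 i) //= ffunE eqxx.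
rewrite (eq_bigr (fun j => (c j)%:R * ((c j)%:R - 1))).
  by rewrite natrD /=; ring.
by move=> j /negbTE ji; rewrite ffunE ji addn0.
Qed.

Lemma q_step M (c : config M) : (0 < Defs.total c)%N ->
  \sum_(i < M) ((c i)%:R / (Defs.total c)%:R) * qv (Defs.incr c i) = qv c.
Proof.
move=> hn; set n : rat := (Defs.total c)%:R.
have n0 : n != 0 by rewrite pnatr_eq0 -lt0n.
have n1 : n + 1 != 0 by rewrite natr1 pnatr_eq0.
have n2 : n + 2 != 0 by rewrite -natrD pnatr_eq0 addn2.
rewrite (eq_bigr (fun i => (c i)%:R * ((Ssq c + 2) / (n * (n+1) * (n+2)) + 2 / (n * (n+2)))
    + (c i)%:R * ((c i)%:R - 1) * (2 / (n * (n+1) * (n+2))))); last first.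
  move=> i _; rewrite /qv Sq_incr total_incr -/n -natr1 -/n.
  have n3 : n + 1 + 1 != 0 by rewrite -addrA.
  by field; rewrite ?n0 ?n1 ?n2 ?n3.
rewrite big_split /= -!mulr_suml -/(Ssq c) -natr_sum -/(Defs.total c) -/n /qv -/n.
by field; rewrite n0 n1 n2.
Qed.

Lemma urn_lin M (F : config M -> rat) (A B : rat) k (c : config M) :
  (0 < Defs.total c)%N ->
  (forall d, Defs.total d = (Defs.total c + k)%N -> F d = A * qv d + B) ->
  urn_exp F k c = A * qv c + B.
Proof.
elim: k c => [|k IH] c hc hF /=; first by apply: hF; rewrite addn0.
have n0 : (Defs.total c)%:R != 0 :> rat by rewrite pnatr_eq0 -lt0n.
rewrite (eq_bigr (fun i => ((c i)%:R / (Defs.total c)%:R) * (A * qv (Defs.incr c i) + B))); last first.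
  move=> i _; rewrite IH // total_incr // => d hd; apply: hF; by rewrite hd addSnnS.
rewrite (eq_bigr (fun i => A * (((c i)%:R / (Defs.total c)%:R) * qv (Defs.incr c i)) + B * ((c i)%:R / (Defs.total c)%:R))); last by move=> i _; ring.
rewrite big_split /= -mulr_sumr q_step // -mulr_sumr -mulr_suml -natr_sum -/(Defs.total c).
by rewrite divff // mulr1.
Qed.

Theorem lemma5p1 (M N : nat) (hM : (1 <= M)%N) (hMN : (M <= N)%N) (hN : (2 <= N)%N) :
  urn_exp (@same_color_prob M) (N - M) (init_urn M) <= 2 / (M.+1)%:R.
Proof.
have tI : Defs.total (init_urn M) = M.
  by rewrite /Defs.total (eq_bigr (fun _ => 1%N)) ?sum1_card ?card_ord // => i _; rewrite ffunE.
set m : rat := M%:R. set nn : rat := N%:R.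
rewrite (@urn_lin _ _ ((nn + 1) / (nn - 1)) (- 2 / (nn - 1))); last 2 first.
- by rewrite tI.
- move=> d; rewrite tI subnKC // => hd.
  have N0 : nn != 0 by rewrite pnatr_eq0 -lt0n (leq_trans _ hN).
  have N1 : nn - 1 != 0 by rewrite subr_eq0 pnatr_eq1 gtn_eqF.
  have N2 : nn + 1 != 0 by rewrite natr1 pnatr_eq0.
  rewrite /same_color_prob hd -/nn (eq_bigr (fun i => (d i)%:R * ((d i)%:R - 1) * (1 / (nn * (nn - 1))))); last first.
    by move=> i _; field; rewrite N0 N1.
  rewrite -mulr_suml -/(Ssq d) /qv hd -/nn.
  by field; rewrite ?N0 ?N1 ?N2.
have -> : qv (init_urn M) = 2 / (m + 1).
  rewrite /qv tI /Ssq -/m big1 ?mul0r ?add0r // => i _; rewrite ffunE; ring.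
have N1 : 0 < nn - 1 by rewrite subr_gt0 ltr1n.
have m0 : 1 <= m by rewrite ler1n.
have m1 : 2 <= m + 1 by lra.
have x1 : 2 / (m + 1) <= 1 by rewrite ler_pdivrMr ?mul1r // (lt_le_trans _ m1).
rewrite -natr1 -/nn -/m mulrAC -mulrDl ler_pdivrMr //.
have -> : M.+1%:R = m + 1 :> rat by rewrite natr1.
move: x1; set x := _ / (m + 1) => x1. nra.
Qed.
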